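(* For every positive integer $n$, the average value of the Wiener index over $\mathcal{G}_n$ is $$W_{avr}(\mathcal{G}_n)=\frac{1}{|\mathcal{G}_n|}\sum_{G\in\mathcal{G}_n}W(G)=\frac13\left(25n^3+60n^2-4n\right).$$
   Context: The Wiener index is $W(G)=\sum_{\{u,v\}\subseteq V(G)}d_G(u,v)$, $d_G$ the shortest-path distance. A spiro hexagonal chain $G_n=H_0H_1\cdots H_{n-1}$ with $n$ hexagons is a connected graph whose blocks are hexagons (6-cycles) $H_0,\dots,H_{n-1}$, each hexagon having at most two cut-vertices, each cut-vertex shared by exactly two hexagons, and $H_{k-1},H_k$ sharing the cut-vertex $c_k$ ($1\le k\le n-1$). For $1\le i\le n-2$, the hexagon $H_i$ is labelled $O$, $M$ or $P$ according as the distance in $H_i$ between $c_i$ and $c_{i+1}$ is $1$, $2$ or $3$; the word $x_1x_2\cdots x_{n-2}$ over $\{O,M,P\}$ is the code of the chain (empty if $n\le2$). The code determines the chain up to isomorphism, and a code and its reverse describe the same chain. $\mathcal{G}_n$ denotes the set of all spiro hexagonal chains with $n$ hexagons, i.e. one chain for each class of codes of length $n-2$ under identification of a word with its reverse (so $|\mathcal{G}_n|=\frac12(3^{n-2}+3^{\lfloor (n-1)/2\rfloor})$ for $n\ge2$). *)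

(* Defs.v *)
From HB Require Import structures.
From mathcomp Require Import all_boot all_order all_algebra.
Set Implicit Arguments. Unset Strict Implicit. Unset Printing Implicit Defensive.
Import Order.TTheory GRing.Theory Num.Theory.

Definition walk_of_len (T : finType) (e : rel T) (k : nat) (u v : T) : bool :=
  [exists p : k.-tuple T, path e u p && (last u p == v)].

(* d_G(u,v): the least k such that a walk of length k from u to v exists
   (= shortest-path distance; graphs considered here are connected). *)
Definition dist (T : finType) (e : rel T) (u v : T) : nat :=
  find (fun k => walk_of_len e k u v) (iota 0 #|T|).

(* Wiener index of the graph with vertex set [V] and edge relation [e]:
   sum of distances over unordered pairs {u,v} of distinct vertices
   (each unordered pair counted once, via the order enum_rank u < enum_rank v). *)
Definition wiener (T : finType) (V : {pred T}) (e : rel T) : nat :=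
  \sum_(u in V) \sum_(v in V | enum_rank u < enum_rank v) dist e u v.

(* A code letter is an element of 'I_3:  0 = O, 1 = M, 2 = P.
   Letter i means the two cut-vertices of the hexagon are at distance i+1. *)
Definition spiro_code (n : nat) := (n.-2).-tuple 'I_3.

(* Hexagon H_k has vertices (k, j), j : 'I_6, forming the cycle
   (k,0)-(k,1)-...-(k,5)-(k,0).  Vertex (k,0) (k >= 1) is the cut vertex c_k
   shared with H_(k-1), where it is the vertex (k-1, exitpos (k-1)).
   For H_0 the position of c_1 is immaterial (hexagon symmetry); we take 3.
   For 1 <= k <= n-2, exitpos k = x_k + 1 is the distance between c_k and c_(k+1). *)
Definition exitpos (n : nat) (c : spiro_code n) (k : nat) : nat :=
  if k == 0 then 3 else (nth ord0 (val c) k.-1).+1.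

Definition svert (n : nat) := ('I_n * 'I_6)%type.

Definition ord_pred_nat (n : nat) (k : 'I_n) : 'I_n :=
  @Ordinal n k.-1 (leq_ltn_trans (leq_pred k) (ltn_ord k)).

Definition canon (n : nat) (c : spiro_code n) (x : svert n) : svert n :=
  if (0 < x.1) && (x.2 == ord0) then
    (ord_pred_nat x.1, inord (exitpos c (x.1).-1))
  else x.

Definition chain_vertex (n : nat) (c : spiro_code n) : {pred svert n} :=
  fun x => canon c x == x.

Definition chain_adj (n : nat) (c : spiro_code n) : rel (svert n) :=
  fun u v => [exists x : svert n,
    ((canon c x == u) && (canon c (x.1, ordS x.2) == v)) ||
    ((canon c x == v) && (canon c (x.1, ordS x.2) == u))].

Definition W_chain (n : nat) (c : spiro_code n) : nat :=
  wiener (chain_vertex c) (chain_adj c).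

(* The set G_n: classes of codes of length n-2 under identification of a
   word with its reverse; one chain (a representative code) per class. *)
Definition code_classes (n : nat) : {set {set spiro_code n}} :=
  [set [set c; [tuple of rev c]] | c : spiro_code n].

Definition default_code (n : nat) : spiro_code n := [tuple ord0 | _ < n.-2].

Definition class_rep (n : nat) (K : {set spiro_code n}) : spiro_code n :=
  odflt (default_code n) [pick c in K].

Definition W_avr (n : nat) : rat :=
  ((\sum_(K in code_classes n) W_chain (class_rep K))%:R / (#|code_classes n|)%:R)%R.

(* Main.v *)
Require Import Defs.
From mathcomp Require Import all_boot all_order all_algebra.
From mathcomp Require Import zify.
Set Implicit Arguments. Unset Strict Implicit. Unset Printing Implicit Defensive.

Definition hd (i j : 'I_6) : nat :=
  let d := if i <= j then j - i else i - j in minn d (6 - d).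

Ltac c6 := case=> [[|[|[|[|[|[|//]]]]]] ?].

Lemma hd_sym i j : hd i j = hd j i.
Proof. by move: i j; do 2 c6. Qed.
Lemma hd_ii i : hd i i = 0.
Proof. by move: i; c6. Qed.
Lemma hd0_eq i j : hd i j = 0 -> i = j.
Proof. move: i j; do 2 c6; move=> /= H; try discriminate H; exact: val_inj. Qed.
Lemma hd_le3 i j : hd i j <= 3.
Proof. by move: i j; do 2 c6. Qed.
Lemma hd_L1 i t : hd (ordS i) t <= hd i t + 1.
Proof. by move: i t; do 2 c6. Qed.
Lemma hd_L2 i t : hd i t <= hd (ordS i) t + 1.
Proof. by move: i t; do 2 c6. Qed.
Lemma hd_step i t : i != t ->
  (hd (ordS i) t == (hd i t).-1) || (hd (ord_pred i) t == (hd i t).-1).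
Proof. by move: i t; do 2 c6. Qed.
Lemma hd0_small (t : 'I_6) : t <= 3 -> hd ord0 t = t.
Proof. by move: t; c6. Qed.
Lemma hd_pos i j : i != j -> 0 < hd i j.
Proof. by rewrite lt0n; apply: contra => /eqP /hd0_eq ->. Qed.

Definition gg (e : nat -> 'I_6) k := hd ord0 (e k).
Definition Sg (e : nat -> 'I_6) a b := \sum_(a <= k < b) gg e k.
Definition Dn (e : nat -> 'I_6) (a : nat) (i : 'I_6) (b : nat) (j : 'I_6) : nat :=
  if a == b then hd i j else if a < b then hd i (e a) + Sg e a.+1 b + hd ord0 j
  else hd j (e b) + Sg e b.+1 a + hd ord0 i.

Lemma Sg_nil e a : Sg e a a = 0.
Proof. by rewrite /Sg big_geq. Qed.
Lemma Sg_recl e a b : a < b -> Sg e a b = gg e a + Sg e a.+1 b.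
Proof. by move=> h; rewrite /Sg big_ltn. Qed.
Lemma Sg_recr e a b : a <= b -> Sg e a b.+1 = Sg e a b + gg e b.
Proof. by move=> h; rewrite /Sg big_nat_recr. Qed.

Lemma Dn_eq e a i j : Dn e a i a j = hd i j.
Proof. by rewrite /Dn eqxx. Qed.
Lemma Dn_lt e a i b j : a < b -> Dn e a i b j = hd i (e a) + Sg e a.+1 b + hd ord0 j.
Proof. by move=> h; rewrite /Dn (ltn_eqF h) h. Qed.
Lemma Dn_gt e a i b j : b < a -> Dn e a i b j = hd j (e b) + Sg e b.+1 a + hd ord0 i.
Proof. by move=> h; rewrite /Dn (gtn_eqF h) ltnNge (ltnW h). Qed.

Lemma Dn_sym e a i b j : Dn e a i b j = Dn e b j a i.
Proof.
case: (ltngtP a b) => h.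
- by rewrite Dn_lt // Dn_gt.
- by rewrite Dn_gt // Dn_lt.
- by rewrite h !Dn_eq hd_sym.
Qed.

Lemma Dn_canon e a b j : 0 < a -> Dn e a ord0 b j = Dn e a.-1 (e a.-1) b j.
Proof.
case: a => // a _ /=.
case: (ltngtP a.+1 b) => h.
- rewrite Dn_lt // Dn_lt; last by lia.
  by rewrite hd_ii (Sg_recl _ h) /gg; lia.
- case: (ltngtP a b) => h2.
  + lia.
  + rewrite Dn_gt // Dn_gt //. rewrite Sg_recr //; rewrite /gg hd_ii; lia.
  + by rewrite -h2 Dn_gt // Dn_eq Sg_nil hd_ii hd_sym; lia.
- by rewrite -h Dn_eq Dn_lt // hd_ii Sg_nil.
Qed.

Lemma Dn_L1 e a i b j : Dn e a (ordS i) b j <= Dn e a i b j + 1.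
Proof.
case: (ltngtP a b) => h.
- rewrite !Dn_lt //; have := hd_L1 i (e a); lia.
- rewrite !Dn_gt // (hd_sym ord0 (ordS i)) (hd_sym ord0 i); have := hd_L1 i ord0; lia.
- rewrite h !Dn_eq; exact: hd_L1.
Qed.
Lemma Dn_L2 e a i b j : Dn e a i b j <= Dn e a (ordS i) b j + 1.
Proof.
case: (ltngtP a b) => h.
- rewrite !Dn_lt //; have := hd_L2 i (e a); lia.
- rewrite !Dn_gt // (hd_sym ord0 (ordS i)) (hd_sym ord0 i); have := hd_L2 i ord0; lia.
- rewrite h !Dn_eq; exact: hd_L2.
Qed.

Lemma Sg_le e a b : Sg e a b <= 3 * (b - a).
Proof.
rewrite /Sg (@leq_trans (\sum_(a <= k < b) 3)) //.
  by apply: leq_sum => k _; exact: hd_le3.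
by rewrite sum_nat_const_nat mulnC.
Qed.

Lemma Dn_bound e a i b j : Dn e a i b j <= 3 * (maxn a b - minn a b) + 3.
Proof.
have h1 := hd_le3; have := Sg_le e.
case: (ltngtP a b) => h Sl.
- rewrite Dn_lt //; have := h1 i (e a); have := h1 ord0 j; have := Sl a.+1 b; lia.
- rewrite Dn_gt //; have := h1 j (e b); have := h1 ord0 i; have := Sl b.+1 a; lia.
- rewrite h Dn_eq; have := h1 i j; lia.
Qed.

Definition E n (c : spiro_code n) k : 'I_6 := inord (exitpos c k).
Definition D n (c : spiro_code n) (x y : svert n) := Dn (E c) x.1 x.2 y.1 y.2.

Lemma exitpos_pos n (c : spiro_code n) k : 0 < exitpos c k.
Proof. by rewrite /exitpos; case: ifP. Qed.
Lemma exitpos_le3 n (c : spiro_code n) k : exitpos c k <= 3.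
Proof. by rewrite /exitpos; case: ifP => // _; exact: ltn_ord. Qed.
Lemma E_val n (c : spiro_code n) k : nat_of_ord (E c k) = exitpos c k.
Proof. rewrite /E inordK //; have := exitpos_le3 c k; lia. Qed.

Lemma D_canon n (c : spiro_code n) x y : D c (canon c x) y = D c x y.
Proof.
rewrite /canon; case: ifP => // /andP [h0 /eqP h2].
by rewrite /D /= h2 Dn_canon.
Qed.
Lemma D_sym n (c : spiro_code n) x y : D c x y = D c y x.
Proof. by rewrite /D Dn_sym. Qed.
Lemma D_self n (c : spiro_code n) x : D c x x = 0.
Proof. by rewrite /D Dn_eq hd_ii. Qed.

Lemma chain_vertexP n (c : spiro_code n) (x : svert n) :
  chain_vertex c x = (x.1 == 0 :> nat) || (x.2 != ord0).
Proof.
rewrite /chain_vertex /canon; case: ifP => h.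
  case/andP: h => h0 h2; rewrite h2 orbF eqn0Ngt h0 /=.
  by apply/eqP => /(congr1 (fun z => nat_of_ord z.1)) /=; lia.
by rewrite eqxx; move/negbT: h; rewrite negb_and -eqn0Ngt.
Qed.

Lemma canon_idem n (c : spiro_code n) x : canon c (canon c x) = canon c x.
Proof.
rewrite {2 3}/canon; case: ifP => [_|h]; last by rewrite /canon h.
rewrite /canon /=; case: ifP => // /andP [_ /eqP h].
move/(congr1 (@nat_of_ord 6)): h; rewrite inordK /=; have := exitpos_pos c (x.1).-1; have := exitpos_le3 c (x.1).-1; lia.
Qed.

Lemma D_adj n (c : spiro_code n) u w v : chain_adj c u w -> D c u v <= D c w v + 1.
Proof.
case/existsP=> x /orP [/andP [/eqP hu /eqP hw] | /andP [/eqP hw /eqP hu]];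
  rewrite -hu -hw !D_canon /D /=; [exact: Dn_L2 | exact: Dn_L1].
Qed.

Lemma walk_lower n (c : spiro_code n) k u v :
  walk_of_len (chain_adj c) k u v -> D c u v <= k.
Proof.
case/existsP => p /andP [hp /eqP hl]; have hs := size_tuple p.
move: hp hl hs; move: (tval p) => s hp <- <-.
elim: s u hp => [|w s IH] u /=; first by rewrite D_self.
case/andP=> ha hs; have := D_adj (last w s) ha; have := IH w hs; rewrite /=.
by move=> h1 h2; apply: (leq_trans h2); rewrite addn1 ltnS.
Qed.

Lemma step n (c : spiro_code n) (x : svert n) t : x.2 != t ->
  exists y : svert n, [/\ y.1 = x.1, hd y.2 t = (hd x.2 t).-1 &
                         chain_adj c (canon c x) (canon c y)].
Proof.
case: x => a i /= ht; case/orP: (hd_step ht) => /eqP h.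
  exists (a, ordS i); split=> //; apply/existsP; exists (a, i).
  by rewrite !eqxx.
exists (a, ord_pred i); split=> //; apply/existsP; exists (a, ord_pred i).
by rewrite /= ord_predK !eqxx orbT.
Qed.

Lemma descend_via n (c : spiro_code n) (v u x : svert n) t R : canon c x = u -> x.2 != t ->
  (forall i', Dn (E c) x.1 i' v.1 v.2 = hd i' t + R) ->
  exists w, chain_adj c u w /\ D c w v = (D c u v).-1.
Proof.
move=> <- ht hR; have [y [e1 e2 adj]] := step c ht.
exists (canon c y); split=> //.
rewrite !D_canon /D e1 !hR e2; have := hd_pos ht; lia.
Qed.

Lemma descent n (c : spiro_code n) (u v : svert n) :
  chain_vertex c u -> chain_vertex c v -> 0 < D c u v ->
  exists w, chain_adj c u w /\ D c w v = (D c u v).-1.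
Proof.
move: u v => [a i] [b j] hu hv hD.
have cu : canon c (a, i) = (a, i) by apply/eqP.
rewrite !chain_vertexP /= in hu hv.
have {}hD : 0 < Dn (E c) a i b j by [].
case: (ltngtP a b) => h.
- case: (eqVneq i (E c a)) => hi; last first.
    apply: (@descend_via n c (b, j) (a, i) (a, i) (E c a) (Sg (E c) a.+1 b + hd ord0 j)) => //.
    by move=> i' /=; rewrite Dn_lt // addnA.
  have ha1 : a.+1 < n by apply: leq_ltn_trans h (ltn_ord b).
  pose a1 : 'I_n := Ordinal ha1.
  have eu : canon c (a1, ord0) = (a, i).
    rewrite /canon /= hi; congr pair; exact: val_inj.
  case: (ltngtP a.+1 b) => h2.
  + apply: (@descend_via n c (b, j) (a, i) (a1, ord0) (E c a.+1)
             (Sg (E c) a.+2 b + hd ord0 j)) => //=.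
      apply/eqP => /(congr1 (@nat_of_ord 6)); rewrite E_val /=.
      by have := exitpos_pos c a.+1; lia.
    by move=> i'; rewrite Dn_lt // addnA.
  + lia.
  + apply: (@descend_via n c (b, j) (a, i) (a1, ord0) j 0) => //=.
      by move: hv; rewrite -h2 /= eq_sym.
    by move=> i'; rewrite -h2 Dn_eq addn0.
- apply: (@descend_via n c (b, j) (a, i) (a, i) ord0 (hd j (E c b) + Sg (E c) b.+1 a)) => //=.
    have ha0 : (a == 0 :> nat) = false by apply/eqP; lia.
    by move: hu; rewrite ha0.
  by move=> i'; rewrite Dn_gt // (hd_sym i' ord0) addnC.
- apply: (@descend_via n c (b, j) (a, i) (a, i) j (0)) => //=.
    by apply/eqP => hij; move: hD; rewrite h hij Dn_eq hd_ii.
  by move=> i'; rewrite h Dn_eq addn0.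
Qed.

Lemma D0_eq n (c : spiro_code n) (u v : svert n) :
  chain_vertex c u -> chain_vertex c v -> D c u v = 0 -> u = v.
Proof.
move: u v => [a i] [b j]; rewrite !chain_vertexP /D /= => hu hv.
case: (ltngtP a b) => h.
- rewrite Dn_lt // => /eqP; rewrite !addn_eq0 => /andP [_ /eqP /hd0_eq hj].
  by move: hv; rewrite -hj eqxx orbF; lia.
- rewrite Dn_gt // => /eqP; rewrite !addn_eq0 => /andP [_ /eqP /hd0_eq hi].
  by move: hu; rewrite -hi eqxx orbF; lia.
- rewrite h Dn_eq => /hd0_eq ->; congr pair; exact: val_inj.
Qed.

Lemma walk_upper n (c : spiro_code n) (v : svert n) : chain_vertex c v ->
  forall d u, chain_vertex c u -> D c u v = d -> walk_of_len (chain_adj c) d u v.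
Proof.
move=> hv; elim=> [|d IH] u hu hd.
  have -> := D0_eq hu hv hd.
  by apply/existsP; exists [tuple]; rewrite /= eqxx.
have [w [hw1 hw2]] := descent hu hv (ltac:(by rewrite hd)).
have hwv : chain_vertex c w.
  case/existsP: hw1 => x /orP [/andP [_ /eqP <-] | /andP [/eqP <- _]];
  by rewrite /chain_vertex canon_idem.
case/existsP: (IH w hwv (ltac:(by rewrite hw2 hd))) => p /andP [hp hl].
apply/existsP; exists [tuple of w :: p]; rewrite /= hw1 hp.
exact: hl.
Qed.

Lemma find_first (P : pred nat) d N : P d -> d < N ->
  (forall k, k < d -> ~~ P k) -> find P (iota 0 N) = d.
Proof.
move=> hP hN hlt.
rewrite -(subnKC (ltnW hN)) iotaD find_cat.
have -> : has P (iota 0 d) = false.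
  apply/negbTE/hasPn => k; rewrite mem_iota add0n => /andP [_ hk]; exact: hlt.
rewrite size_iota add0n.
case: (N - d) (ltac:(lia) : 0 < N - d) => // m _ /=.
by rewrite hP addn0.
Qed.

Lemma dist_D n (c : spiro_code n) (u v : svert n) :
  chain_vertex c u -> chain_vertex c v -> dist (chain_adj c) u v = D c u v.
Proof.
move=> hu hv; rewrite /dist; apply: find_first.
- exact: walk_upper.
- rewrite card_prod !card_ord.
  have := Dn_bound (E c) u.1 u.2 v.1 v.2; rewrite -/(D c u v).
  have := ltn_ord u.1; have := ltn_ord v.1; lia.
- move=> k hk; apply/negP => /walk_lower; lia.
Qed.

Lemma sum_pairs (T : finType) (V : {pred T}) (f : T -> T -> nat) :
  (forall u v, f u v = f v u) -> (forall u, f u u = 0) ->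
  2 * (\sum_(u in V) \sum_(v in V | enum_rank u < enum_rank v) f u v) =
  \sum_(u in V) \sum_(v in V) f u v.
Proof.
move=> fs f0.
have hs : forall u, \sum_(v in V) f u v =
   \sum_(v in V | enum_rank u < enum_rank v) f u v +
   \sum_(v in V | enum_rank v < enum_rank u) f u v.
  move=> u; rewrite (bigID (fun v => enum_rank u < enum_rank v)) /=; congr addn.
  rewrite big_mkcond [RHS]big_mkcond; apply: eq_bigr => v _.
  case: (v \in V) => //=; case: (ltngtP (enum_rank u) (enum_rank v)) => // h.
  by rewrite -(enum_rank_inj (val_inj h)) f0.
rewrite (eq_bigr _ (fun u _ => hs u)) big_split /= mul2n -addnn; congr addn.
symmetry; transitivity (\sum_u \sum_v
  (if [&& u \in V, v \in V & enum_rank v < enum_rank u] then f u v else 0)).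
  rewrite big_mkcond; apply: eq_bigr => u _; case: (u \in V) => /=.
    by rewrite big_mkcond; apply: eq_bigr => v _; case: (v \in V).
  by rewrite big1.
rewrite exchange_big [RHS]big_mkcond; apply: eq_bigr => u _; case: (u \in V) => /=.
  by rewrite [RHS]big_mkcond; apply: eq_bigr => v _; case: (v \in V) => //=; rewrite fs.
by rewrite big1 // => v _; rewrite andbF.
Qed.

Lemma W2 n (c : spiro_code n) :
  2 * W_chain c = \sum_(u in chain_vertex c) \sum_(v in chain_vertex c) D c u v.
Proof.
rewrite /W_chain /wiener -sum_pairs; last 2 first.
- exact: D_sym.
- exact: D_self.
congr (2 * _); apply: eq_bigr => u hu; apply: eq_bigr => v /andP [hv _].
exact: dist_D.
Qed.

Definition ok a (i : 'I_6) := (a == 0) || (i != ord0).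
Definition Q e a b := \sum_(i < 6 | ok a i) \sum_(j < 6 | ok b j) Dn e a i b j.
Definition Tot e m := \sum_(0 <= a < m) \sum_(0 <= b < m) Q e a b.

Lemma sum_to_Tot n (c : spiro_code n) :
  \sum_(u in chain_vertex c) \sum_(v in chain_vertex c) D c u v = Tot (E c) n.
Proof.
have hV : forall F : svert n -> nat,
    \sum_(u in chain_vertex c) F u = \sum_(a < n) \sum_(i < 6 | ok a i) F (a, i).
  move=> F; rewrite pair_big_dep /=; apply: eq_big => [u|u _] /=.
    by rewrite unfold_in; exact: chain_vertexP.
  by case: u.
rewrite hV /Tot big_mkord; apply: eq_bigr => a _.
rewrite big_mkord.
under eq_bigr do rewrite hV.
rewrite exchange_big /=; apply: eq_bigr => b _.
by rewrite /Q.
Qed.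

Definition pp a := if a == 0 then 6 else 5.
Definition A e a := \sum_(i < 6 | ok a i) hd i (e a).
Definition U e m := \sum_(0 <= k < m) k * gg e k.
Definition G e m := \sum_(0 <= a < m) (if a == 0 then 0 else gg e a).
Definition T e m := \sum_(0 <= k < m) k * (m.-1 - k) * gg e k.

Ltac exp6 := repeat (rewrite ?big_mkcond !big_ord_recl !big_ord0); reflexivity.

Lemma sumc (P : pred 'I_6) c : \sum_(i < 6 | P i) c = c * \sum_(i < 6 | P i) 1.
Proof. by rewrite big_distrr /=; apply: eq_bigr => i _; rewrite muln1. Qed.

Lemma cnt_ok a : \sum_(i < 6 | ok a i) 1 = pp a.
Proof. by rewrite /ok /pp; case: (a == 0); exp6. Qed.
Lemma sum_hd0 : \sum_(j < 6 | j != ord0) hd ord0 j = 9.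
Proof. exp6. Qed.

Lemma Qdiag e a : Q e a a = if a == 0 then 54 else 36.
Proof.
rewrite /Q; under eq_bigr do under eq_bigr do rewrite Dn_eq.
rewrite /ok; case: (a == 0); exp6.
Qed.

Lemma Asum e a : A e a + (if a == 0 then 0 else gg e a) = 9.
Proof. rewrite /A /gg /ok; move: (e a) => t; case: (a == 0); move: t; c6; exp6. Qed.

Lemma Qcross e a b : a < b -> Q e a b = 5 * A e a + 5 * (pp a * Sg e a.+1 b) + 9 * pp a.
Proof.
move=> h; rewrite /Q; under eq_bigr do under eq_bigr do rewrite Dn_lt //.
have hb : (b == 0) = false by apply/eqP; lia.
rewrite /A /ok hb /=; move: (Sg e a.+1 b) (e a) => s t.
under eq_bigr do rewrite !big_split /= sumc sum_hd0 [\sum_(j < 6 | j != ord0) s]sumc.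
have -> : \sum_(j < 6 | j != ord0) 1 = 5 by exp6.
rewrite !big_split /= sumc -/(ok a) cnt_ok -big_distrl /= [\sum_(i < 6 | _) 9]sumc cnt_ok; lia.
Qed.

Lemma Qsym e a b : Q e a b = Q e b a.
Proof.
rewrite /Q exchange_big; apply: eq_bigr => j _; apply: eq_bigr => i _.
exact: Dn_sym.
Qed.

Lemma sump m : \sum_(0 <= a < m) pp a = 5 * m + (0 < m).
Proof.
elim: m => [|m IH]; first by rewrite big_geq.
rewrite big_nat_recr //= IH /pp; case: m {IH} => //= m; lia.
Qed.

Lemma sumA e m : \sum_(0 <= a < m) A e a + G e m = 9 * m.
Proof.
rewrite /G -big_split /= (eq_bigr (fun _ => 9)); last by move=> a _; exact: Asum.
by rewrite sum_nat_const_nat subn0 mulnC.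
Qed.

Lemma Ysum e m : \sum_(0 <= a < m) pp a * Sg e a.+1 m = 5 * U e m + G e m.
Proof.
elim: m => [|m IH]; first by rewrite /U /G !big_geq.
rewrite big_nat_recr //= Sg_nil muln0 addn0.
rewrite (@eq_big_nat _ _ _ 0 m _ (fun a => pp a * Sg e a.+1 m + pp a * gg e m)); last first.
  by move=> a /andP [_ ha]; rewrite Sg_recr // mulnDr.
rewrite big_split /= IH -big_distrl /= sump /U /G !big_nat_recr //=.
case: m {IH} => [|m] /=; first by rewrite !big_geq.
lia.
Qed.

Lemma Xsum e m : \sum_(0 <= a < m) Q e a m = 90 * m + 25 * U e m + 9 * (0 < m).
Proof.
rewrite (@eq_big_nat _ _ _ 0 m _ (fun a => 5 * A e a + 5 * (pp a * Sg e a.+1 m) + 9 * pp a)); last first.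
  by move=> a /andP [_ ha]; rewrite Qcross.
rewrite !big_split /= !big1_eq Ysum sump.
have := sumA e m; lia.
Qed.

Lemma Tot_rec e m : Tot e m.+1 = Tot e m + 2 * \sum_(0 <= a < m) Q e a m + Q e m m.
Proof.
rewrite /Tot (@eq_big_nat _ _ _ 0 m.+1 _ (fun a => \sum_(0 <= b < m) Q e a b + Q e a m)); last first.
  by move=> a _; rewrite big_nat_recr.
rewrite big_split /= !(big_nat_recr m) //=.
rewrite (@eq_big_nat _ _ _ 0 m (fun b => Q e m b) (fun b => Q e b m)); last by move=> b _; exact: Qsym.
lia.
Qed.

Lemma T_rec e m : T e m.+1 = T e m + U e m.
Proof.
rewrite /T /U big_nat_recr //= subnn muln0 mul0n addn0 -big_split /=.
apply: eq_big_nat => k /andP [_ hk].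
have -> : m - k = (m.-1 - k) + 1 by lia.
by rewrite mulnDr muln1 mulnDl.
Qed.

Lemma Tot_closed e m : Tot e m + 36 * m = 90 * (m * m) + 50 * T e m.
Proof.
elim: m => [|m IH]; first by rewrite /Tot /T !big_geq.
rewrite Tot_rec Xsum Qdiag T_rec.
case: m IH => [|m] IH /=; first by rewrite /Tot /U /T !big_geq.
nia.
Qed.

Lemma W_formula n (c : spiro_code n) : W_chain c + 18 * n = 45 * (n * n) + 25 * T (E c) n.
Proof. have := W2 c; rewrite sum_to_Tot => h; have := Tot_closed (E c) n; lia. Qed.

Lemma gE n (c : spiro_code n) k : gg (E c) k = exitpos c k.
Proof. by rewrite /gg hd0_small E_val // exitpos_le3. Qed.

Definition sig n (c : spiro_code n) : spiro_code n := [tuple of map (@rev_ord 3) c].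
Definition revc n (c : spiro_code n) : spiro_code n := [tuple of rev c].

Definition Z n := \sum_(0 <= k < n) k * (n.-1 - k).

Lemma T_sig n (c : spiro_code n) : T (E c) n + T (E (sig c)) n = 4 * Z n.
Proof.
rewrite /T /Z -big_split big_distrr /=; apply: eq_big_nat => k /andP [_ hk].
rewrite !gE -mulnDr.
case: (posnP k) => [->|k0]; first by rewrite ?mul0n ?muln0.
case: (leqP n.-1 k) => hk2.
  have -> : n.-1 - k = 0 by lia.
  by rewrite ?muln0 ?mul0n.
suff -> : exitpos c k + exitpos (sig c) k = 4 by rewrite mulnC.
rewrite /exitpos (gtn_eqF k0) /= (nth_map ord0); last by rewrite size_tuple; lia.
by case: (nth ord0 c k.-1) => x hx /=; lia.
Qed.

Lemma T_rev n (c : spiro_code n) : T (E (revc c)) n = T (E c) n.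
Proof.
rewrite /T big_nat_rev /=; apply: eq_big_nat => k /andP [_ hk].
rewrite add0n !gE.
have -> : n.-1 - (n - k.+1) = k by lia.
have -> : n - k.+1 = n.-1 - k by lia.
rewrite [_ * k]mulnC.
case: (posnP k) => [->|k0]; first by rewrite ?mul0n ?muln0.
case: (leqP n.-1 k) => hk2.
  have -> : n.-1 - k = 0 by lia.
  by rewrite ?muln0 ?mul0n.
congr (_ * _).
rewrite /exitpos (gtn_eqF k0); have -> : (n.-1 - k == 0) = false by apply/eqP; lia.
rewrite /= nth_rev; last by rewrite size_tuple; lia.
rewrite size_tuple.
by have -> : n.-2 - (n.-1 - k).-1.+1 = k.-1 by lia.
Qed.

Lemma sumk m : 2 * \sum_(0 <= k < m) k + m = m * m.
Proof. elim: m => [|m IH]; first by rewrite big_geq. rewrite big_nat_recr //=; nia. Qed.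

Lemma Z_rec m : Z m.+1 = Z m + \sum_(0 <= k < m) k.
Proof.
rewrite /Z big_nat_recr //= subnn muln0 addn0 -big_split /=.
apply: eq_big_nat => k /andP [_ hk].
have -> : m - k = (m.-1 - k) + 1 by lia.
by rewrite mulnDr muln1.
Qed.

Lemma Z_closed m : 6 * Z m + 3 * (m * m) = m * m * m + 2 * m.
Proof.
elim: m => [|m IH]; first by rewrite /Z big_geq.
rewrite Z_rec; have := sumk m; nia.
Qed.

Lemma rep_in n (K : {set spiro_code n}) x : x \in K -> class_rep K \in K.
Proof.
move=> hx; rewrite /class_rep; case: pickP => [y hy|h] //=.
by move: (h x); rewrite hx.
Qed.

Lemma class_T n (c y : spiro_code n) : y \in [set c; [tuple of rev c]] ->
  T (E y) n = T (E c) n.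
Proof. by rewrite !inE => /orP [/eqP -> | /eqP ->] //; exact: T_rev. Qed.

Lemma sigK n : involutive (@sig n).
Proof.
move=> c; apply: val_inj; rewrite /= -map_comp (eq_map (@rev_ordK 3)).
exact: map_id.
Qed.

Lemma sK_class n (c : spiro_code n) :
  (@sig n) @: [set c; [tuple of rev c]] = [set sig c; [tuple of rev (sig c)]].
Proof.
rewrite imsetU1 imset_set1; congr (_ |: [set _]).
by apply: val_inj; rewrite /= map_rev.
Qed.

Lemma sKK n (K : {set spiro_code n}) : (@sig n) @: ((@sig n) @: K) = K.
Proof. by rewrite -imset_comp (eq_imset _ (@sigK n)) imset_id. Qed.

Lemma memCC n (K : {set spiro_code n}) :
  K \in code_classes n -> (@sig n) @: K \in code_classes n.
Proof.
case/imsetP => c _ ->; rewrite sK_class; apply/imsetP; exists (sig c) => //.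
Qed.

Lemma pairK n (K : {set spiro_code n}) : 0 < n -> K \in code_classes n ->
  3 * (W_chain (class_rep K) + W_chain (class_rep ((@sig n) @: K))) =
  2 * (25 * n ^ 3 + 60 * n ^ 2 - 4 * n).
Proof.
move=> hn hK; have hK' := memCC hK.
case/imsetP: hK => c _ eK.
have h1 : T (E (class_rep K)) n = T (E c) n.
  by apply: class_T; rewrite -eK; apply: (@rep_in _ _ c); rewrite eK !inE eqxx.
have h2 : T (E (class_rep ((@sig n) @: K))) n = T (E (sig c)) n.
  apply: class_T; rewrite -sK_class -eK.
  by apply: (@rep_in _ _ (sig c)); rewrite eK sK_class !inE eqxx.
have w1 := W_formula (class_rep K); have w2 := W_formula (class_rep ((@sig n) @: K)).
rewrite h1 in w1; rewrite h2 in w2.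
have ts := T_sig c; have zc := Z_closed n.
have -> : n ^ 3 = n * n * n by rewrite !expnS expn0 muln1 mulnA.
have -> : n ^ 2 = n * n by rewrite !expnS expn0 muln1.
have : n <= n * n by rewrite leq_pmull.
lia.
Qed.

Import GRing.Theory Num.Theory.

Theorem theorem5p2 (n : nat) (hn : 0 < n) :
  W_avr n = ((25 * n ^ 3 + 60 * n ^ 2 - 4 * n)%:R / 3%:R)%R.
Proof.
set M := 25 * n ^ 3 + 60 * n ^ 2 - 4 * n.
set S := \sum_(K in code_classes n) W_chain (class_rep K).
have hre : S = \sum_(K in code_classes n) W_chain (class_rep ((@sig n) @: K)).
  have sinj : injective (fun K : {set spiro_code n} => (@sig n) @: K).
    by move=> K1 K2 /= h; rewrite -(sKK K1) h sKK.
  rewrite /S (reindex_inj sinj).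
  apply: eq_bigl => K /=; apply/idP/idP => [h|h]; last exact: memCC.
  by rewrite -(sKK K); apply: memCC.
have h2 : 3 * (2 * S) = \sum_(K in code_classes n) 2 * M.
  rewrite [in LHS]mul2n -addnn {2}hre -big_split big_distrr /=.
  by apply: eq_bigr => K hK; rewrite pairK.
rewrite sum_nat_const in h2.
have hS : S * 3 = M * #|code_classes n| by lia.
have hC : 0 < #|code_classes n|.
  apply/card_gt0P; exists [set default_code n; [tuple of rev (default_code n)]].
  exact: imset_f.
rewrite /W_avr -/S; apply/eqP.
rewrite eqr_div ?pnatr_eq0 -?lt0n // -!natrM hS.
by [].
Qed.
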